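(* Let $\mathfrak{n}$ be a complex simple Lie algebra of type $B_n$ ($n\ge2$) and let $\mathfrak{n}=\mathfrak{n}_{-3}\oplus\cdots\oplus\mathfrak{n}_3$ be the $|3|$-grading associated to $\Sigma_i=\{\alpha_1,\alpha_i\}$, where $2\le i\le n$. Then there is no graded isomorphism between $\mathfrak{F}_{r,3}$ and $\mathfrak{n}_{-3}\oplus\mathfrak{n}_{-2}\oplus\mathfrak{n}_{-1}$ (for any positive integer $r$).
   Context: Simple roots of $B_n$ are labeled in the standard way, with highest root $\alpha_1+2\alpha_2+\cdots+2\alpha_n$. For a root $\alpha=\sum a_l\alpha_l$ and a set $\Sigma$ of simple roots, $ht_\Sigma(\alpha)=\sum_{\alpha_l\in\Sigma}a_l$; the grading associated to $\Sigma$ is $\mathfrak{n}_m=\bigoplus_{ht_\Sigma(\alpha)=m}\mathfrak{g}_\alpha$ ($m\ne0$), $\mathfrak{n}_0=\mathfrak{h}\oplus\bigoplus_{ht_\Sigma(\alpha)=0}\mathfrak{g}_\alpha$, a $|3|$-grading since the highest root has $\Sigma_i$-height $3$. $\mathfrak{F}_{r,3}$ is the free nilpotent Lie algebra of step $3$ on $r$ generators with canonical grading $\mathfrak{f}_{-1}$ (span of generators), $\mathfrak{f}_{-2}=[\mathfrak{f}_{-1},\mathfrak{f}_{-1}]$, $\mathfrak{f}_{-3}=[\mathfrak{f}_{-1},\mathfrak{f}_{-2}]$; a graded isomorphism is a Lie algebra isomorphism mapping $\mathfrak{f}_{-m}$ onto $\mathfrak{n}_{-m}$ for $m=1,2,3$.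 *)

(* Defs.v *)
From HB Require Import structures.
From mathcomp Require Import all_boot all_order all_algebra.
From mathcomp Require Import reals complex.
Set Implicit Arguments. Unset Strict Implicit. Unset Printing Implicit Defensive.
Import Order.TTheory GRing.Theory Num.Theory.
Local Open Scope ring_scope.

Record lieAlgebra (K : fieldType) := LieAlgebra {
  lie_sort :> lmodType K;
  lie_br : lie_sort -> lie_sort -> lie_sort;
  lie_brDl : forall (a : K) (x y z : lie_sort),
      lie_br (a *: x + y) z = a *: lie_br x z + lie_br y z;
  lie_brDr : forall (a : K) (x y z : lie_sort),
      lie_br z (a *: x + y) = a *: lie_br z x + lie_br z y;
  lie_alt : forall x : lie_sort, lie_br x x = 0;
  lie_jacobi : forall x y z : lie_sort,
      lie_br x (lie_br y z) + lie_br y (lie_br z x) + lie_br z (lie_br x y) = 0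
}.
Arguments lie_br {K} _ _ _.

Definition step_le3 (K : fieldType) (L : lieAlgebra K) : Prop :=
  forall x y z w : L, lie_br L x (lie_br L y (lie_br L z w)) = 0.

Definition lie_hom (K : fieldType) (L M : lieAlgebra K) (h : L -> M) : Prop :=
  (forall (a : K) (x y : L), h (a *: x + y) = a *: h x + h y) /\
  (forall x y : L, h (lie_br L x y) = lie_br M (h x) (h y)).

Definition free_nilpotent3 (K : fieldType) (r : nat) (F : lieAlgebra K)
    (gen : 'I_r -> F) : Prop :=
  step_le3 F /\
  forall (L : lieAlgebra K) (g : 'I_r -> L), step_le3 L ->
    (exists h : F -> L, lie_hom h /\ forall j, h (gen j) = g j) /\
    (forall h1 h2 : F -> L, lie_hom h1 -> lie_hom h2 ->
        (forall j, h1 (gen j) = g j) -> (forall j, h2 (gen j) = g j) ->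
        forall x, h1 x = h2 x).

(* canonical grading of F_{r,3} *)
Definition fgr1 (K : fieldType) (r : nat) (F : lieAlgebra K) (gen : 'I_r -> F)
    (x : F) : Prop :=
  exists c : 'I_r -> K, x = \sum_(j < r) c j *: gen j.
Definition fgr2 (K : fieldType) (r : nat) (F : lieAlgebra K) (gen : 'I_r -> F)
    (x : F) : Prop :=
  exists s : seq (F * F),
    (forall p, p \in s -> fgr1 gen p.1 /\ fgr1 gen p.2) /\
    x = \sum_(p <- s) lie_br F p.1 p.2.
Definition fgr3 (K : fieldType) (r : nat) (F : lieAlgebra K) (gen : 'I_r -> F)
    (x : F) : Prop :=
  exists s : seq (F * F),
    (forall p, p \in s -> fgr1 gen p.1 /\ fgr2 gen p.2) /\
    x = \sum_(p <- s) lie_br F p.1 p.2.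

(* so(2n+1) w.r.t. the symmetric form with antidiagonal Gram matrix J;
   indices 0..2n.  The Cartan subalgebra is the diagonal matrices
   diag(t_1,..,t_n,0,-t_n,..,-t_1). *)
Definition Jform (K : fieldType) (n : nat) : 'M[K]_(n.*2.+1) :=
  \matrix_(p, q) ((p + q == n.*2)%N)%:R.

Definition in_so (K : fieldType) (n : nat) (X : 'M[K]_(n.*2.+1)) : Prop :=
  X^T *m Jform K n + Jform K n *m X = 0.

(* weight of the basis vector at position p, in coordinates w.r.t. e_1..e_n
   (0-indexed k) : e_{p+1} for p < n, 0 for p = n, -e_{2n-p+1} for p > n. *)
Definition weight (n : nat) (p : 'I_(n.*2.+1)) : 'I_n -> int :=
  fun k => if (p < n)%N then ((p : nat) == k)%:Z
           else if (p : nat) == n then 0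
           else - (((n.*2 - p)%N == k)%:Z).

(* simple roots of B_n (0-indexed): alpha_l = e_l - e_{l+1} (l < n-1),
   alpha_{n-1} = e_{n-1}; highest root e_1 + e_2 = a1 + 2 a2 + ... + 2 an. *)
Definition simple_root (n : nat) (l : 'I_n) : 'I_n -> int :=
  fun k => ((k == l)%:Z - (((l.+1 < n)%N && ((k : nat) == l.+1))%:Z)).

(* coefficient of alpha_l when writing c = sum_k c_k e_k in the basis of
   simple roots (e_k = alpha_k + ... + alpha_n) *)
Definition alpha_coef (n : nat) (c : 'I_n -> int) (l : nat) : int :=
  \sum_(k < n | (k <= l)%N) c k.

(* Sigma_i-height, Sigma_i = {alpha_1, alpha_i} (1-indexed), i >= 2 *)
Definition ht_Sigma (n i : nat) (c : 'I_n -> int) : int :=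
  alpha_coef c 0 + alpha_coef c i.-1.

(* n_m for m <> 0 : sum of the root spaces g_alpha with ht_Sigma alpha = m;
   the root space of alpha in so(2n+1) consists of the elements supported on
   the entries (p,q) with weight p - weight q = alpha. *)
Definition ngr (K : fieldType) (n i : nat) (m : int) (X : 'M[K]_(n.*2.+1))
    : Prop :=
  in_so X /\
  forall p q, X p q != 0 -> ht_Sigma i (fun k => weight p k - weight q k) = m.

Definition nminus (K : fieldType) (n i : nat) (X : 'M[K]_(n.*2.+1)) : Prop :=
  exists X1 X2 X3, [/\ ngr i (-1) X1, ngr i (-2) X2, ngr i (-3) X3 &
                       X = X1 + X2 + X3].

Definition graded_iso (K : fieldType) (n i r : nat) (F : lieAlgebra K)
    (gen : 'I_r -> F) (phi : F -> 'M[K]_(n.*2.+1)) : Prop :=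
  [/\ (forall (a : K) (x y : F), phi (a *: x + y) = a *: phi x + phi y),
      (forall x y : F, phi (lie_br F x y) = phi x *m phi y - phi y *m phi x),
      injective phi,
      (forall x, nminus i (phi x)) /\ (forall X, nminus i X -> exists x, phi x = X) &
      [/\ (forall x, fgr1 gen x -> ngr i (-1) (phi x)) /\
          (forall X, ngr i (-1) X -> exists x, fgr1 gen x /\ phi x = X),
          (forall x, fgr2 gen x -> ngr i (-2) (phi x)) /\
          (forall X, ngr i (-2) X -> exists x, fgr2 gen x /\ phi x = X) &
          (forall x, fgr3 gen x -> ngr i (-3) (phi x)) /\
          (forall X, ngr i (-3) X -> exists x, fgr3 gen x /\ phi x = X)]].
Arguments graded_iso {K} n i {r F} gen phi.

(* Main.v *)
Require Import Defs.
From HB Require Import structures.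
From mathcomp Require Import all_boot all_order all_algebra.
From mathcomp Require Import reals complex ring zify.
Import Order.TTheory GRing.Theory Num.Theory.
Local Open Scope ring_scope.
Local Open Scope complex_scope.

Set Implicit Arguments. Unset Strict Implicit. Unset Printing Implicit Defensive.

Section Fil.
Variable K : fieldType.
Definition cf (u : 'rV[K]_4) (m : nat) : K := u ord0 (inord m).
Definition fbr (u v : 'rV[K]_4) : 'rV[K]_4 :=
  \row_t (if (t : nat) == 2%N then cf u 0 * cf v 1 - cf u 1 * cf v 0
          else if (t : nat) == 3%N then cf u 0 * cf v 2 - cf u 2 * cf v 0 else 0).

Lemma cfE (u : 'rV[K]_4) (t : 'I_4) : u ord0 t = cf u t.
Proof. by rewrite /cf inord_val. Qed.

Lemma fbr_cf u v m : (m < 4)%N -> cf (fbr u v) m =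
  if m == 2%N then cf u 0 * cf v 1 - cf u 1 * cf v 0
          else if m == 3%N then cf u 0 * cf v 2 - cf u 2 * cf v 0 else 0.
Proof. by move=> hm; rewrite /cf mxE inordK. Qed.

Lemma cfD a u v m : cf (a *: u + v) m = a * cf u m + cf v m.
Proof. by rewrite /cf !mxE. Qed.

Ltac solve_row := apply/rowP; case => [[|[|[|[|//]]]] Ht]; rewrite !mxE /=;
   rewrite ?cfD ?fbr_cf //= ?cfD ?fbr_cf //=; try ring.

Lemma fbrDl (a : K) (x y z : 'rV[K]_4) : fbr (a *: x + y) z = a *: fbr x z + fbr y z.
Proof. solve_row. Qed.
Lemma fbrDr (a : K) (x y z : 'rV[K]_4) : fbr z (a *: x + y) = a *: fbr z x + fbr z y.
Proof. solve_row. Qed.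
Lemma fbr_alt x : fbr x x = 0.
Proof. solve_row. Qed.
Lemma fbr_jacobi x y z : fbr x (fbr y z) + fbr y (fbr z x) + fbr z (fbr x y) = 0.
Proof. solve_row. Qed.
Lemma fbr_step3 x y z w : fbr x (fbr y (fbr z w)) = 0.
Proof. solve_row. Qed.

Definition filLie : lieAlgebra K := LieAlgebra fbrDl fbrDr fbr_alt fbr_jacobi.
Lemma filLie_step : step_le3 filLie.
Proof. move=> x y z w; exact: fbr_step3. Qed.
End Fil.

Section LieFacts.
Variable K : fieldType.
Variable L : lieAlgebra K.
Lemma br0l (y : L) : lie_br L 0 y = 0.
Proof.
have := lie_brDl 1 (0 : L) 0 y; rewrite !scale1r !addr0 => e.
by have := congr1 (fun z => z - lie_br L 0 y) e; rewrite subrr addrK => <-.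
Qed.
Lemma br0r (y : L) : lie_br L y 0 = 0.
Proof.
have := lie_brDr 1 (0 : L) 0 y; rewrite !scale1r !addr0 => e.
by have := congr1 (fun z => z - lie_br L y 0) e; rewrite subrr addrK => <-.
Qed.
Lemma brZr a (x y : L) : lie_br L x (a *: y) = a *: lie_br L x y.
Proof. by have := lie_brDr a y 0 x; rewrite addr0 br0r addr0. Qed.
End LieFacts.

Section HomFacts.
Variable K : fieldType.
Variables L M : lieAlgebra K.
Variable h : L -> M.
Hypothesis hh : lie_hom h.
Lemma hom0 : h 0 = 0.
Proof.
have := hh.1 1 0 0; rewrite !scale1r !addr0 => e.
by have := congr1 (fun z => z - h 0) e; rewrite subrr addrK => <-.
Qed.
Lemma homD x y : h (x + y) = h x + h y.
Proof. by have := hh.1 1 x y; rewrite !scale1r. Qed.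
Lemma homZ a x : h (a *: x) = a *: h x.
Proof. by have := hh.1 a x 0; rewrite !addr0 hom0 addr0. Qed.
Lemma hom_sum r (c : 'I_r -> K) (v : 'I_r -> L) :
  h (\sum_(j < r) c j *: v j) = \sum_(j < r) c j *: h (v j).
Proof.
rewrite (big_morph h homD hom0); apply: eq_bigr => j _; exact: homZ.
Qed.
End HomFacts.

Lemma cf_sum (K : fieldType) r (c : 'I_r -> K) (v : 'I_r -> 'rV[K]_4) m :
  cf (\sum_(j < r) c j *: v j) m = \sum_(j < r) c j * cf (v j) m.
Proof. by rewrite /cf summxE; apply: eq_bigr => j _; rewrite mxE. Qed.

Lemma sum_delta (K : fieldType) r (c : 'I_r -> K) j :
  \sum_(m < r) c m * (m == j)%:R = c j.
Proof.
rewrite (bigD1 j) //= eqxx mulr1 big1 ?addr0 // => m /negbTE ->; by rewrite mulr0.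
Qed.

Lemma free_lemma (K : fieldType) r (F : lieAlgebra K) (gen : 'I_r -> F)
  (c d : 'I_r -> K) :
  free_nilpotent3 gen ->
  lie_br F (\sum_(j < r) c j *: gen j)
     (lie_br F (\sum_(j < r) c j *: gen j) (\sum_(j < r) d j *: gen j)) = 0 ->
  lie_br F (\sum_(j < r) c j *: gen j) (\sum_(j < r) d j *: gen j) = 0.
Proof.
move=> [_ Hfree] Hxy.
have [c0|[j cj]] : (forall j, c j = 0) \/ exists j, c j != 0.
  case: (boolP [forall j, c j == 0]) => [/forallP H|H]; [left=> j; exact/eqP|right].
  by move: H; rewrite negb_forall => /existsP.
  by rewrite big1 ?br0l // => j _; rewrite c0 scale0r.
have [prop|[k ck]] : (forall k, c j * d k = c k * d j) \/ exists k, c j * d k != c k * d j.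
  case: (boolP [forall k, c j * d k == c k * d j]) => [/forallP H|H]; [left=> k; exact/eqP|right].
  by move: H; rewrite negb_forall => /existsP.
  have -> : \sum_(j0 < r) d j0 *: gen j0 = (d j / c j) *: \sum_(j0 < r) c j0 *: gen j0.
    rewrite scaler_sumr; apply: eq_bigr => m _; rewrite scalerA; congr (_ *: _).
    apply: (mulfI cj); rewrite prop; field; exact: cj.
  by rewrite brZr lie_alt scaler0.
pose g (m : 'I_r) : filLie K := \row_(t < 4) (if (t : nat) == 0%N then (m == j)%:R
   else if (t : nat) == 1%N then (m == k)%:R else 0).
have [[h [hh hg]] _] := Hfree (@filLie K) g (@filLie_step K).
have hs e : h (\sum_(m < r) e m *: gen m) = \sum_(m < r) e m *: g m.
  by rewrite (hom_sum hh); apply: eq_bigr => m _; rewrite hg.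
have := congr1 h Hxy; rewrite hom0 // !hh.2 !hs.
move=> /(congr1 (fun u => cf u 3)).
rewrite !fbr_cf //= !cf_sum.
have cg m t : (t < 4)%N -> cf (g m) t = if t == 0%N then (m == j)%:R
   else if t == 1%N then (m == k)%:R else 0.
  by move=> ht; rewrite /cf mxE inordK.
have s0 e : \sum_(m < r) e m * cf (g m) 0 = e j.
  by under eq_bigr do rewrite cg //=; exact: sum_delta.
have s1 e : \sum_(m < r) e m * cf (g m) 1 = e k.
  by under eq_bigr do rewrite cg //=; exact: sum_delta.
rewrite !s0 !s1 mulr0 subr0 /cf mxE => /eqP; rewrite mulf_eq0 subr_eq0 (negbTE cj) /=.
by rewrite (negbTE ck).
Qed.

Section Mat.
Variable K : fieldType.
Variable n : nat.
Hypothesis n2 : (2 <= n)%N.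
Local Notation N := (n.*2).
Definition o (m : nat) : 'I_(n.*2.+1) := inord m.
Lemma oK m : (m <= N)%N -> (o m : nat) = m.
Proof. by move=> h; rewrite /o inordK. Qed.

Lemma trJ (A : 'M[K]_(N.+1)) p q : (A^T *m Jform K n) p q = A (o (N - q)) p.
Proof.
rewrite mxE (bigD1 (o (N - q))) //= !mxE oK; last by lia.
rewrite subnK; last by have := ltn_ord q; lia.
rewrite eqxx mulr1 big1 ?addr0 // => k hk; rewrite !mxE.
case: eqP => [e|]; last by rewrite mulr0.
move: hk; rewrite -val_eqE /= oK; last lia.
by move=> /eqP; lia.
Qed.

Lemma Jm (A : 'M[K]_(N.+1)) p q : (Jform K n *m A) p q = A (o (N - p)) q.
Proof.
rewrite mxE (bigD1 (o (N - p))) //= !mxE oK; last by lia.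
rewrite subnKC; last by have := ltn_ord p; lia.
rewrite eqxx mul1r big1 ?addr0 // => k hk; rewrite !mxE.
case: eqP => [e|]; last by rewrite mul0r.
move: hk; rewrite -val_eqE /= oK; last lia.
by move=> /eqP; lia.
Qed.

Lemma so_delta a b a' b' : (a <= N)%N -> (b <= N)%N -> (a' + b = N)%N -> (b' + a = N)%N ->
  in_so (delta_mx (o a) (o b) - delta_mx (o a') (o b') : 'M[K]_(N.+1)).
Proof.
move=> ha hb e1 e2; apply/matrixP => p q; rewrite [LHS]mxE trJ Jm !mxE.
have hp := ltn_ord p; have hq := ltn_ord q.
rewrite -!val_eqE /= !oK; try lia.
have -> : (((N - q)%N == a) && (p == b :> nat)) = (((N - p)%N == a') && (q == b' :> nat)).
  by apply/idP/idP => /andP[/eqP h1 /eqP h2]; apply/andP; split; apply/eqP; lia.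
have -> : (((N - q)%N == a') && (p == b' :> nat)) = (((N - p)%N == a) && (q == b :> nat)).
  by apply/idP/idP => /andP[/eqP h1 /eqP h2]; apply/andP; split; apply/eqP; lia.
ring.
Qed.

Lemma weight_lt (p : 'I_(N.+1)) k : (p < n)%N -> weight p k = ((p : nat) == k)%:Z.
Proof. by move=> h; rewrite /weight h. Qed.
Lemma weight_eq (p : 'I_(N.+1)) k : (p : nat) = n -> weight p k = 0.
Proof. by move=> h; rewrite /weight h ltnn eqxx. Qed.
Lemma weight_gt (p : 'I_(N.+1)) k : (n < p)%N -> weight p k = - (((N - p)%N == k)%:Z).
Proof.
move=> h; rewrite /weight; have -> : (p < n)%N = false by lia.
by have -> : ((p : nat) == n) = false by lia.
Qed.

Lemma alpha_ext (f g : 'I_n -> int) l : (forall k, f k = g k) -> alpha_coef f l = alpha_coef g l.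
Proof. by move=> h; apply: eq_bigr => k _; rewrite h. Qed.

Lemma alpha_delta a l : (a < n)%N -> alpha_coef (fun k : 'I_n => ((a == k :> nat))%:Z) l = (a <= l)%:Z.
Proof.
move=> ha; rewrite /alpha_coef big_mkcond (bigD1 (Ordinal ha)) //= eqxx.
rewrite big1 ?addr0; first by case: (a <= l)%N.
move=> k hk; case: (k <= l)%N => //.
by move: hk; rewrite -val_eqE /= eq_sym => /negbTE ->.
Qed.

Lemma ht_lin i (x0 x1 : int) f : (2 <= i)%N ->
  (forall k : 'I_n, f k = x1 * ((1%N == k :> nat))%:Z + x0 * ((0%N == k :> nat))%:Z) ->
  ht_Sigma i f = x1 + 2%:R * x0.
Proof.
move=> hi hf; rewrite /ht_Sigma !(alpha_ext _ hf) /alpha_coef !big_split /=.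
rewrite -!mulr_sumr.
have d1 := @alpha_delta 1; have d0 := @alpha_delta 0; rewrite /alpha_coef in d1 d0.
rewrite !d1 ?d0 //; last by lia.
have -> : (1 <= i.-1)%N by lia.
rewrite /= mulr0 add0r; last by lia.
lia.
Qed.

Variable i : nat.
Hypothesis i2 : (2 <= i)%N.

Definition Ym : 'M[K]_(N.+1) := delta_mx (o 1) (o 0) - delta_mx (o N) (o N.-1).
Definition Zm : 'M[K]_(N.+1) := delta_mx (o n) (o 1) - delta_mx (o N.-1) (o n).

Lemma ngrY : ngr i (-1) Ym.
Proof.
split; first by apply: so_delta; lia.
move=> p q; rewrite !mxE.
case/boolP: ((p == o 1) && (q == o 0)) => [/andP[/eqP-> /eqP->] _|_].
  apply: (@ht_lin i (-1) 1) => // k.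
  rewrite !weight_lt !oK; try lia. case/boolP: ((p == o N) && (q == o N.-1)) => [/andP[/eqP-> /eqP->] _|_].
  apply: (@ht_lin i (-1) 1) => // k.
  rewrite !weight_gt !oK; try lia.
by rewrite subrr eqxx.
Qed.

Lemma ngrZ : ngr i (-1) Zm.
Proof.
split; first by apply: so_delta; lia.
move=> p q; rewrite !mxE.
case/boolP: ((p == o n) && (q == o 1)) => [/andP[/eqP-> /eqP->] _|_].
  apply: (@ht_lin i 0 (-1)) => // k.
  rewrite weight_eq ?weight_lt !oK; try lia.
case/boolP: ((p == o N.-1) && (q == o n)) => [/andP[/eqP-> /eqP->] _|_].
  apply: (@ht_lin i 0 (-1)) => // k.
  rewrite weight_gt ?(@weight_eq (o n)) !oK; try lia.
by rewrite subrr eqxx.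
Qed.

Lemma oeqF x y : (x <= N)%N -> (y <= N)%N -> x <> y -> (o x == o y) = false.
Proof. by move=> hx hy hxy; rewrite -val_eqE /= !oK //; apply/eqP. Qed.

Lemma commYZ : Ym *m Zm - Zm *m Ym = delta_mx (o N) (o n) - delta_mx (o n) (o 0).
Proof.
rewrite /Ym /Zm !mulmxBl !mulmxBr !mul_delta_mx_cond !eqxx.
rewrite (@oeqF 0 n) ?(@oeqF 0 N.-1) ?(@oeqF N.-1 n) ?(@oeqF 1 N) ?(@oeqF n 1) ?(@oeqF n N); try lia.
rewrite !mulr0n !mulr1n !subr0 !sub0r.
by rewrite opprK.
Qed.

Lemma commYW : Ym *m (Ym *m Zm - Zm *m Ym) - (Ym *m Zm - Zm *m Ym) *m Ym = 0.
Proof.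
rewrite commYZ /Ym !mulmxBl !mulmxBr !mul_delta_mx_cond.
rewrite (@oeqF 0 n) ?(@oeqF 0 N) ?(@oeqF N.-1 n) ?(@oeqF N.-1 N) ?(@oeqF n 1) ?(@oeqF n N) ?(@oeqF 0 1); try lia.
by rewrite !mulr0n !subr0.
Qed.

Lemma commYZ_neq0 : Ym *m Zm - Zm *m Ym != 0.
Proof.
rewrite commYZ; apply/negP => /eqP /matrixP /(_ (o n) (o 0)); rewrite !mxE !eqxx.
rewrite (@oeqF n N) ?andbF /=; try lia.
by move/eqP; rewrite sub0r oppr_eq0 oner_eq0.
Qed.
End Mat.

Unset Implicit Arguments.
Theorem theorem4p6 (R : realType) (n i r : nat) :
  (2 <= n)%N -> (2 <= i <= n)%N -> (0 < r)%N ->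
  forall (F : lieAlgebra R[i]) (gen : 'I_r -> F),
    free_nilpotent3 gen ->
    ~ exists phi : F -> 'M[R[i]]_(n.*2.+1), graded_iso n i gen phi.
Proof.
move=> hn /andP[hi hin] hr F gen Hfree [phi [hlin hbr hinj _ [[_ sur1] _ _]]].
have phi0 : phi 0 = 0.
  have := hlin 1 0 0; rewrite !scale1r !addr0 => e.
  by have := congr1 (fun z => z - phi 0) e; rewrite subrr addrK => <-.
have [y [[c ey] hy]] := sur1 _ (@ngrY R[i] n hn i hi).
have [z [[d ez] hz]] := sur1 _ (@ngrZ R[i] n hn i hi).
have h1 : lie_br F y (lie_br F y z) = 0.
  apply: hinj; rewrite phi0 !hbr hy hz; exact: commYW.
rewrite ey ez in h1; have h2 := @free_lemma _ _ F gen c d Hfree h1; rewrite -ey -ez in h2.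
have := @commYZ_neq0 R[i] n hn i hi; by rewrite -hy -hz -hbr h2 phi0 eqxx.
Qed.
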